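(* Let $\Phi\triangleright\Gamma\vdash^{(b,e,m,f)}t:\sigma$ be a tight derivation in system $\mathscr{E}$. Then there exist $u\in\mathcal{M}$ and a head-reduction sequence $\rho: t\to_h^{(b,e,m)}u$ (containing exactly $b$ steps of kind (b), $e$ steps of kind (e) and $m$ steps of kind (m)) such that $|u|=f$.
   Context: Pair pattern calculus: patterns $p,q ::= x\mid\langle p,q\rangle$ (linear); $\mathrm{var}(p)$ = variables of $p$; $p\# q$ means disjoint variables. Terms $t,u ::= x\mid\lambda p.t\mid\langle t,u\rangle\mid t\,u\mid t[p/u]$, $\mathrm{var}(p)$ bound in $t$ in $\lambda p.t$ and $t[p/u]$; $\mathrm{fv}$ as usual; terms modulo $\alpha$. List contexts $L::=\Box\mid L[p/u]$, $L\langle t\rangle$ plugging (possibly capturing), $\mathrm{bv}(L)$ variables bound by $L$; $t\{x/u\}$ capture-avoiding substitution; $\mathrm{abs}(t)$ iff $t=L\langle\lambda p.u\rangle$. Head reduction ($t\not\to_h$: no $u$ with $t\to_h u$): (b) $L\langle\lambda p.t\rangle u\to_h L\langle t[p/u]\rangle$ if $\mathrm{bv}(L)\cap\mathrm{fv}(u)=\emptyset$; (m) $t[\langle p_1,p_2\rangle/L\langle\langle u_1,u_2\rangle\rangle]\to_h L\langle t[p_1/u_1][p_2/u_2]\rangle$ if $t\not\to_h$ and $\mathrm{bv}(L)\cap\mathrm{fv}(t)=\emptyset$; (e) $t[x/u]\to_h t\{x/u\}$ if $t\not\to_h$; closure: $\lambda p.t\to_h\lambda p.t'$ if $t\to_h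 t'$; $tu\to_h t'u$ if $t\to_h t'$ and not $\mathrm{abs}(t)$; $t[p/u]\to_h t'[p/u]$ if $t\to_h t'$; $t[p/u]\to_h t[p/u']$ if $t\not\to_h$, $p$ not a variable, $u\to_h u'$. The kind of a step is the base rule (b), (e) or (m) it uses. Canonical forms $\mathcal{M} ::= \lambda p.\mathcal{M}\mid\langle t,t\rangle\mid\mathcal{M}[\langle p_1,p_2\rangle/\mathcal{N}]\mid\mathcal{N}$, $\mathcal{N} ::= x\mid\mathcal{N}\,t\mid\mathcal{N}[\langle p_1,p_2\rangle/\mathcal{N}]$, with size $|x|=0$, $|\langle t,u\rangle|=1$, $|\mathcal{N}t|=|\mathcal{N}|+1$, $|\lambda p.\mathcal{M}|=|\mathcal{M}|+1$, $|\mathcal{M}[\langle p_1,p_2\rangle/\mathcal{N}]|=|\mathcal{M}|+|\mathcal{N}|+1$. System $\mathscr{E}$. Types: tight types $\mathtt{t} ::= \bullet_{\mathcal{N}}\mid\bullet_{\mathcal{M}}$; types $\sigma ::= \mathtt{t}\mid \mathcal{A}_1\times\mathcal{A}_2\mid \mathcal{A}\to\sigma$; multi-types $\mathcal{A} ::= [\sigma_k]_{k\in K}$ (finite, possibly empty). Contexts map variables to multi-types, $\mathrm{dom}(\Gamma)$ = variables with non-empty multi-type; $\wedge$ pointwise multiset union; $\Gamma|_p$ restriction to $\mathrm{var}(p)$; $\Gamma\setminus\mathrm{var}(p)$ removal. $\mathrm{tight}(\sigma)$ iff $\sigma\in\{\bullet_{\mathcal{N}},\bullet_{\mathcal{M}}\}$,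 extended elementwise. Rules: (pat_v) $x:\mathcal{A}\Vdash^{(1,0,0)} x:\mathcal{A}$. (pat_×) from $\Gamma\Vdash^{(e_p,m_p,f_p)}p:\mathcal{A}$, $\Delta\Vdash^{(e_q,m_q,f_q)}q:\mathcal{B}$, $p\#q$ infer $\Gamma\wedge\Delta\Vdash^{(e_p+e_q,1+m_p+m_q,f_p+f_q)}\langle p,q\rangle:[\mathcal{A}\times\mathcal{B}]$. (pat_p) if $\mathrm{dom}(\Gamma)\subseteq\mathrm{var}(\langle p,q\rangle)$ and $\mathrm{tight}(\Gamma)$ then $\Gamma\Vdash^{(0,0,1)}\langle p,q\rangle:[\bullet_{\mathcal{N}}]$. (ax) $x:[\sigma]\vdash^{(0,0,0,0)}x:\sigma$. (abs) from $\Gamma\vdash^{(b,e,m,f)}t:\sigma$ and $\Gamma|_p\Vdash^{(e_p,m_p,f_p)}p:\mathcal{A}$ infer $\Gamma\setminus\mathrm{var}(p)\vdash^{(b+1,e+e_p,m+m_p,f+f_p)}\lambda p.t:\mathcal{A}\to\sigma$. (abs_p) from $\Gamma\vdash^{(b,e,m,f)}t:\mathtt{t}$ ($\mathtt{t}$ tight) and $\mathrm{tight}(\Gamma|_p)$ infer $\Gamma\setminus\mathrm{var}(p)\vdash^{(b,e,m,f+1)}\lambda p.t:\bullet_{\mathcal{M}}$. (many) from $(\Gamma_k\vdash^{(b_k,e_k,m_k,f_k)}t:\sigma_k)_{k\in K}$ infer $\wedge_k\Gamma_k\vdash^{(\sum b_k,\sum e_k,\sum m_k,\sum f_k)}t:[\sigma_k]_{k\in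 K}$. (app) from $\Gamma\vdash^{(b_t,e_t,m_t,f_t)}t:\mathcal{A}\to\sigma$, $\Delta\vdash^{(b_u,e_u,m_u,f_u)}u:\mathcal{A}$ infer $\Gamma\wedge\Delta\vdash^{(b_t+b_u,e_t+e_u,m_t+m_u,f_t+f_u)}t\,u:\sigma$. (app_p) from $\Gamma\vdash^{(b,e,m,f)}t:\bullet_{\mathcal{N}}$ infer $\Gamma\vdash^{(b,e,m,f+1)}t\,u:\bullet_{\mathcal{N}}$. (pair) from $\Gamma\vdash^{(b_t,e_t,m_t,f_t)}t:\mathcal{A}$, $\Delta\vdash^{(b_u,e_u,m_u,f_u)}u:\mathcal{B}$ infer $\Gamma\wedge\Delta\vdash^{(b_t+b_u,e_t+e_u,m_t+m_u,f_t+f_u)}\langle t,u\rangle:\mathcal{A}\times\mathcal{B}$. (pair_p) $\vdash^{(0,0,0,1)}\langle t,u\rangle:\bullet_{\mathcal{M}}$. (match) from $\Gamma\vdash^{(b_t,e_t,m_t,f_t)}t:\sigma$, $\Gamma|_p\Vdash^{(e_p,m_p,f_p)}p:\mathcal{A}$, $\Delta\vdash^{(b_u,e_u,m_u,f_u)}u:\mathcal{A}$ infer $(\Gamma\setminus\mathrm{var}(p))\wedge\Delta\vdash^{(b_t+b_u,e_t+e_u+e_p,m_t+m_u+m_p,f_t+f_u+f_p)}t[p/u]:\sigma$. A derivation is tight if its context and its type are tight. *)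

(* Defs.v *)
(* Pair pattern calculus, head reduction, and system E.
   Terms are represented with (multi-binder) de Bruijn indices, so that
   terms are taken modulo alpha-conversion by construction. *)
From Stdlib Require Import List PeanoNat Arith.
Import ListNotations.

(* A pattern is a binary tree whose leaves are the (anonymous) bound
   variables; linearity and disjointness p # q are automatic.
   Leaves are numbered left to right: in <p,q> the leaves of p are
   0 .. nv p - 1 and those of q are nv p .. nv p + nv q - 1. *)
Inductive pat : Type :=
| PV : pat
| PP : pat -> pat -> pat.

Fixpoint nv (p : pat) : nat :=
  match p with PV => 1 | PP p q => nv p + nv q end.

(* A binder with pattern p binds nv p indices:
   inside the body, index i < nv p is leaf i of p, and index i >= nv p
   refers to i - nv p outside the binder.
   Lam p t  = \p.t            (t under p)
   ES t p u = t[p/u]          (t under p, u not) *)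
Inductive term : Type :=
| Var : nat -> term
| Lam : pat -> term -> term
| Pair : term -> term -> term
| App : term -> term -> term
| ES : term -> pat -> term -> term.

Fixpoint lift (c d : nat) (t : term) : term :=
  match t with
  | Var n => Var (if n <? c then n else n + d)
  | Lam p t0 => Lam p (lift (c + nv p) d t0)
  | Pair t1 t2 => Pair (lift c d t1) (lift c d t2)
  | App t1 t2 => App (lift c d t1) (lift c d t2)
  | ES t0 p u => ES (lift (c + nv p) d t0) p (lift c d u)
  end.

Fixpoint substk (k : nat) (t u : term) : term :=
  match t with
  | Var n => if n <? k then Var n else if n =? k then lift 0 k u else Var (n - 1)
  | Lam p t0 => Lam p (substk (k + nv p) t0 u)
  | Pair t1 t2 => Pair (substk k t1 u) (substk k t2 u)
  | App t1 t2 => App (substk k t1 u) (substk k t2 u)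
  | ES t0 p v => ES (substk (k + nv p) t0 u) p (substk k v u)
  end.

(* t{x/u} where x is the variable bound by the explicit substitution *)
Definition subst0 (t u : term) : term := substk 0 t u.

(* List contexts L ::= Box | L[p/u], head of the list = outermost [p/u].
   Plugging is (possibly) capturing: indices of the plugged term first
   refer to the binders of L. *)
Definition lctx := list (pat * term).

Fixpoint plug (L : lctx) (t : term) : term :=
  match L with
  | [] => t
  | (p, u) :: L' => ES (plug L' t) p u
  end.

Fixpoint nbv (L : lctx) : nat :=
  match L with [] => 0 | (p, _) :: L' => nv p + nbv L' end.

Definition abs (t : term) : Prop :=
  exists L p u, t = plug L (Lam p u).

Inductive kind : Type := Kb | Ke | Km.

(* Defined by structural
   recursion on t, since the rules contain negative premises "t -/->_h"
   on strict subterms.  The side conditions bv(L) # fv(u) of (b) and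
   bv(L) # fv(t) of (m) are realised by the shifts (alpha-renaming). *)
Fixpoint hstep (t : term) (k : kind) (v : term) {struct t} : Prop :=
  match t with
  | Var _ => False
  | Pair _ _ => False
  | Lam p t0 => exists t0', hstep t0 k t0' /\ v = Lam p t0'
  | App t1 u =>
      (k = Kb /\ exists L p t0, t1 = plug L (Lam p t0) /\
                                v = plug L (ES t0 p (lift 0 (nbv L) u)))
      \/
      (exists t1', hstep t1 k t1' /\ ~ abs t1 /\ v = App t1' u)
  | ES t0 p u =>
      (k = Km /\ exists p1 p2 L u1 u2,
          p = PP p1 p2 /\ u = plug L (Pair u1 u2) /\
          (forall k' w, ~ hstep t0 k' w) /\
          v = plug L (ES (ES (lift (nv p1 + nv p2) (nbv L) t0)
                             p1 (lift 0 (nv p2) u1)) p2 u2))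
      \/
      (k = Ke /\ p = PV /\ (forall k' w, ~ hstep t0 k' w) /\ v = subst0 t0 u)
      \/
      (exists t0', hstep t0 k t0' /\ v = ES t0' p u)
      \/
      ((forall k' w, ~ hstep t0 k' w) /\ p <> PV /\
       exists u', hstep u k u' /\ v = ES t0 p u')
  end.

Inductive hseq : term -> nat -> nat -> nat -> term -> Prop :=
| hseq_refl t : hseq t 0 0 0 t
| hseq_b t t' b e m u : hstep t Kb t' -> hseq t' b e m u -> hseq t (S b) e m u
| hseq_e t t' b e m u : hstep t Ke t' -> hseq t' b e m u -> hseq t b (S e) m u
| hseq_m t t' b e m u : hstep t Km t' -> hseq t' b e m u -> hseq t b e (S m) u.

Inductive canN : term -> Prop :=
| canN_var x : canN (Var x)
| canN_app n t : canN n -> canN (App n t)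
| canN_es n p1 p2 n' : canN n -> canN n' -> canN (ES n (PP p1 p2) n').

Inductive canM : term -> Prop :=
| canM_lam p m : canM m -> canM (Lam p m)
| canM_pair t u : canM (Pair t u)
| canM_es m p1 p2 n : canM m -> canN n -> canM (ES m (PP p1 p2) n)
| canM_N n : canN n -> canM n.

(* |.| (only meaningful on canonical forms) *)
Fixpoint csize (t : term) : nat :=
  match t with
  | Var _ => 0
  | Pair _ _ => 1
  | App n _ => csize n + 1
  | Lam _ m => csize m + 1
  | ES m _ n => csize m + csize n + 1
  end.

(* multi-types are finite multisets, represented as lists considered up
   to (deep) permutation, see teq/meq *)
Inductive ty : Type :=
| TN : ty
| TM : ty
| TProd : list ty -> list ty -> ty
| TArr : list ty -> ty -> ty.

Definition mty := list ty.

Inductive teq : ty -> ty -> Prop :=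
| teq_N : teq TN TN
| teq_M : teq TM TM
| teq_prod A1 A2 B1 B2 : meq A1 B1 -> meq A2 B2 -> teq (TProd A1 A2) (TProd B1 B2)
| teq_arr A B s s' : meq A B -> teq s s' -> teq (TArr A s) (TArr B s')
with meq : mty -> mty -> Prop :=
| meq_nil : meq [] []
| meq_skip s s' A B : teq s s' -> meq A B -> meq (s :: A) (s' :: B)
| meq_swap s1 s2 A : meq (s1 :: s2 :: A) (s2 :: s1 :: A)
| meq_trans A B C : meq A B -> meq B C -> meq A C.

Definition tight (s : ty) : Prop := s = TN \/ s = TM.

Definition ctx := nat -> mty.

Definition tight_ctx (G : ctx) : Prop := forall i, Forall tight (G i).

Definition ctx_empty : ctx := fun _ => [].
Definition ctx_single (x : nat) (A : mty) : ctx :=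
  fun i => if i =? x then A else [].
Definition ctx_union (G D : ctx) : ctx := fun i => G i ++ D i.
(* G|_p : restriction to the (first nv p) variables bound by p *)
Definition ctx_restr (n : nat) (G : ctx) : ctx :=
  fun i => if i <? n then G i else [].
(* G \ var(p) : removal of the variables bound by p *)
Definition ctx_drop (n : nat) (G : ctx) : ctx := fun i => G (i + n).

Inductive ptyp : ctx -> pat -> mty -> nat -> nat -> nat -> Prop :=
| pat_v G A :
    meq (G 0) A -> (forall i, i <> 0 -> G i = []) ->
    ptyp G PV A 1 0 0
| pat_x G G1 G2 p q A B ep mp fp eq mq fq :
    ptyp G1 p A ep mp fp -> ptyp G2 q B eq mq fq ->
    (forall i, meq (G i) (if i <? nv p then G1 i else G2 (i - nv p))) ->
    ptyp G (PP p q) [TProd A B] (ep + eq) (1 + mp + mq) (fp + fq)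
| pat_p G p q :
    (forall i, nv (PP p q) <= i -> G i = []) -> tight_ctx G ->
    ptyp G (PP p q) [TN] 0 0 1.

Inductive typ : ctx -> term -> ty -> nat -> nat -> nat -> nat -> Prop :=
| ty_ax x s : typ (ctx_single x [s]) (Var x) s 0 0 0 0
| ty_abs G t s p A b e m f ep mp fp :
    typ G t s b e m f -> ptyp (ctx_restr (nv p) G) p A ep mp fp ->
    typ (ctx_drop (nv p) G) (Lam p t) (TArr A s) (S b) (e + ep) (m + mp) (f + fp)
| ty_abs_p G t s p b e m f :
    typ G t s b e m f -> tight s ->
    tight_ctx (ctx_restr (nv p) G) ->
    typ (ctx_drop (nv p) G) (Lam p t) TM b e m (S f)
| ty_app G D t u A s bt et mt ft bu eu mu fu :
    typ G t (TArr A s) bt et mt ft -> mtyp D u A bu eu mu fu ->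
    typ (ctx_union G D) (App t u) s (bt + bu) (et + eu) (mt + mu) (ft + fu)
| ty_app_p G t u b e m f :
    typ G t TN b e m f -> typ G (App t u) TN b e m (S f)
| ty_pair G D t u A B bt et mt ft bu eu mu fu :
    mtyp G t A bt et mt ft -> mtyp D u B bu eu mu fu ->
    typ (ctx_union G D) (Pair t u) (TProd A B) (bt + bu) (et + eu) (mt + mu) (ft + fu)
| ty_pair_p t u : typ ctx_empty (Pair t u) TM 0 0 0 1
| ty_match G D t p u s A A' bt et mt ft ep mp fp bu eu mu fu :
    typ G t s bt et mt ft -> ptyp (ctx_restr (nv p) G) p A ep mp fp ->
    mtyp D u A' bu eu mu fu -> meq A A' ->
    typ (ctx_union (ctx_drop (nv p) G) D) (ES t p u) s
        (bt + bu) (et + eu + ep) (mt + mu + mp) (ft + fu + fp)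
(* multi-types are multisets: derivations are taken up to permutation *)
| ty_conv G G' t s s' b e m f :
    typ G t s b e m f -> (forall i, meq (G i) (G' i)) -> teq s s' ->
    typ G' t s' b e m f
with mtyp : ctx -> term -> mty -> nat -> nat -> nat -> nat -> Prop :=
| many_nil t : mtyp ctx_empty t [] 0 0 0 0
| many_cons G D t s A b1 e1 m1 f1 b2 e2 m2 f2 :
    typ G t s b1 e1 m1 f1 -> mtyp D t A b2 e2 m2 f2 ->
    mtyp (ctx_union G D) t (s :: A) (b1 + b2) (e1 + e2) (m1 + m2) (f1 + f2).

(* Main.v *)
Require Import Defs.
From Stdlib Require Import List PeanoNat Arith Lia Permutation FunctionalExtensionality Classical.
Import ListNotations.

Scheme typ_ind2 := Induction for typ Sort Prop
  with mtyp_ind2 := Induction for mtyp Sort Prop.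
Combined Scheme typ_mtyp_ind from typ_ind2, mtyp_ind2.
Scheme teq_ind2 := Induction for teq Sort Prop
  with meq_ind2 := Induction for meq Sort Prop.

Fixpoint teq_refl (s : ty) : teq s s :=
  match s with
  | TN => teq_N
  | TM => teq_M
  | TProd A B =>
      let fix mr (A : list ty) : meq A A :=
        match A with [] => meq_nil | x :: A' => meq_skip _ _ _ _ (teq_refl x) (mr A') end in
      teq_prod _ _ _ _ (mr A) (mr B)
  | TArr A s0 =>
      let fix mr (A : list ty) : meq A A :=
        match A with [] => meq_nil | x :: A' => meq_skip _ _ _ _ (teq_refl x) (mr A') end in
      teq_arr _ _ _ _ (mr A) (teq_refl s0)
  end.

Lemma meq_refl A : meq A A.
Proof. induction A; constructor; auto using teq_refl. Qed.

Lemma teq_meq_sym : (forall s s', teq s s' -> teq s' s) /\ (forall A B, meq A B -> meq B A).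
Proof.
  split; [apply (teq_ind2 (fun s s' _ => teq s' s) (fun A B _ => meq B A))
         |apply (meq_ind2 (fun s s' _ => teq s' s) (fun A B _ => meq B A))];
  intros.
  all: first [ constructor; assumption | constructor | eapply meq_trans; eassumption ].
Qed.
Lemma teq_sym s s' : teq s s' -> teq s' s. Proof. apply teq_meq_sym. Qed.
Lemma meq_sym A B : meq A B -> meq B A. Proof. apply teq_meq_sym. Qed.

Lemma teq_trans s1 s2 s3 : teq s1 s2 -> teq s2 s3 -> teq s1 s3.
Proof.
  intros H; revert s3; induction H; intros s3 H3; inversion H3; subst; constructor;
  eauto using meq_trans.
Qed.

Lemma meq_length A B : meq A B -> length A = length B.
Proof. induction 1; simpl; congruence. Qed.

Lemma meq_nil_l B : meq [] B -> B = [].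
Proof. intros H; apply meq_length in H; destruct B; simpl in *; congruence. Qed.
Lemma meq_nil_r B : meq B [] -> B = [].
Proof. intros H; apply meq_length in H; destruct B; simpl in *; congruence. Qed.

Lemma meq_single_aux A B : meq A B -> forall a, A = [a] -> exists b, B = [b] /\ teq a b.
Proof.
  induction 1; intros a Ha; try discriminate.
  - inversion Ha; subst. apply meq_nil_l in H0; subst. eauto.
  - destruct (IHmeq1 a Ha) as [b [-> Hb]]. destruct (IHmeq2 b eq_refl) as [c [-> Hc]].
    eauto using teq_trans.
Qed.
Lemma meq_single a B : meq [a] B -> exists b, B = [b] /\ teq a b.
Proof. intros; eapply meq_single_aux; eauto. Qed.
Lemma meq_single_r a B : meq B [a] -> exists b, B = [b] /\ teq b a.
Proof. intros H. apply meq_sym in H. destruct (meq_single _ _ H) as [b [-> Hb]]. eauto using teq_sym. Qed.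

Lemma perm_meq A B : Permutation A B -> meq A B.
Proof. induction 1. constructor. apply meq_skip; auto using teq_refl. apply meq_swap. eapply meq_trans; eauto. Qed.

Lemma meq_app_l A B C : meq A B -> meq (A ++ C) (B ++ C).
Proof. induction 1; simpl. apply meq_refl. apply meq_skip; auto. apply meq_swap. eapply meq_trans; eauto. Qed.
Lemma meq_app_r A B C : meq B C -> meq (A ++ B) (A ++ C).
Proof. induction A; simpl; auto. intros; constructor; auto using teq_refl. Qed.
Lemma meq_app A B C D : meq A B -> meq C D -> meq (A ++ C) (B ++ D).
Proof. intros; eapply meq_trans; [apply meq_app_l|apply meq_app_r]; eauto. Qed.

Lemma teq_tight s s' : teq s s' -> tight s -> tight s'.
Proof. intros H [->| ->]; inversion H; subst; red; auto. Qed.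
Lemma meq_tight A B : meq A B -> Forall tight A -> Forall tight B.
Proof.
  induction 1; intros HF; auto.
  - inversion HF; subst; constructor; eauto using teq_tight.
  - inversion HF; subst. inversion H2; subst. constructor; [assumption|constructor; assumption].
Qed.

Lemma teq_TN s : teq TN s -> s = TN. Proof. inversion 1; auto. Qed.
Lemma teq_TN_r s : teq s TN -> s = TN. Proof. inversion 1; auto. Qed.
Lemma teq_TM s : teq TM s -> s = TM. Proof. inversion 1; auto. Qed.
Lemma teq_TM_r s : teq s TM -> s = TM. Proof. inversion 1; auto. Qed.

Definition ctx_ins (c d : nat) (G : ctx) : ctx :=
  fun i => if i <? c then G i else if i <? c + d then [] else G (i - d).
Definition ctx_rm (k : nat) (G : ctx) : ctx :=
  fun i => if i <? k then G i else G (S i).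
Definition ceq (G G' : ctx) : Prop := forall i, meq (G i) (G' i).

Ltac cx_destr :=
  repeat match goal with
  | |- context[?a <? ?b] => destruct (Nat.ltb_spec a b)
  | |- context[?a =? ?b] => destruct (Nat.eqb_spec a b)
  end.
Ltac cx_fin :=
  repeat rewrite app_nil_r; simpl; repeat rewrite app_assoc;
  try reflexivity; try (exfalso; lia); try (f_equal; lia);
  try (repeat (match goal with |- (_ ++ _) = (_ ++ _) => f_equal end); try reflexivity; f_equal; lia).
Ltac cx := apply functional_extensionality; intro i;
  unfold ctx_ins, ctx_rm, ctx_drop, ctx_restr, ctx_union, ctx_single, ctx_empty;
  cx_destr; cx_fin.

Lemma lift_lift t : forall c a b, lift c a (lift c b t) = lift c (a + b) t.
Proof.
  induction t; intros; simpl; try (f_equal; auto; fail).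
  destruct (Nat.ltb_spec n c); simpl.
  - destruct (Nat.ltb_spec n c); try lia; auto.
  - destruct (Nat.ltb_spec (n + b) c); try lia. f_equal; lia.
Qed.

Lemma lift_0 t : forall c, lift c 0 t = t.
Proof.
  induction t; intros; simpl; try (f_equal; auto; fail).
  destruct (n <? c); f_equal; lia.
Qed.

Lemma typ_cnt G t s b e m f b' e' m' f' :
  typ G t s b e m f -> b = b' -> e = e' -> m = m' -> f = f' -> typ G t s b' e' m' f'.
Proof. intros; subst; auto. Qed.
Lemma typ_G G G' t s b e m f : typ G t s b e m f -> G = G' -> typ G' t s b e m f.
Proof. intros; subst; auto. Qed.
Lemma typ_ceq G G' t s b e m f : typ G t s b e m f -> ceq G G' -> typ G' t s b e m f.
Proof. intros; eapply ty_conv; eauto using teq_refl. Qed.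

Lemma ceq_refl G : ceq G G. Proof. intro; apply meq_refl. Qed.
Lemma ceq_sym G G' : ceq G G' -> ceq G' G. Proof. intros H i; apply meq_sym; auto. Qed.
Lemma ceq_trans G1 G2 G3 : ceq G1 G2 -> ceq G2 G3 -> ceq G1 G3.
Proof. intros H1 H2 i; eapply meq_trans; eauto. Qed.
Lemma ceq_union G G' D D' : ceq G G' -> ceq D D' -> ceq (ctx_union G D) (ctx_union G' D').
Proof. intros H1 H2 i; apply meq_app; auto. Qed.
Lemma ceq_ins c d G G' : ceq G G' -> ceq (ctx_ins c d G) (ctx_ins c d G').
Proof. intros H i; unfold ctx_ins; cx_destr; auto; constructor. Qed.
Lemma ceq_rm k G G' : ceq G G' -> ceq (ctx_rm k G) (ctx_rm k G').
Proof. intros H i; unfold ctx_rm; cx_destr; auto. Qed.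
Lemma ceq_drop k G G' : ceq G G' -> ceq (ctx_drop k G) (ctx_drop k G').
Proof. intros H i; unfold ctx_drop; auto. Qed.
Lemma ceq_restr k G G' : ceq G G' -> ceq (ctx_restr k G) (ctx_restr k G').
Proof. intros H i; unfold ctx_restr; cx_destr; auto; constructor. Qed.
Lemma ceq_perm G G' : (forall i, Permutation (G i) (G' i)) -> ceq G G'.
Proof. intros H i; apply perm_meq; auto. Qed.

Lemma union_empty_r G : ctx_union G ctx_empty = G.
Proof. cx. Qed.
Lemma union_empty_l G : ctx_union ctx_empty G = G.
Proof. cx. Qed.

Lemma ptyp_support G p A e m f : ptyp G p A e m f -> forall i, nv p <= i -> G i = [].
Proof.
  induction 1; intros i Hi; simpl in *.
  - apply H0; lia.
  - specialize (H1 i). destruct (Nat.ltb_spec i (nv p)); try lia.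
    rewrite IHptyp2 in H1 by lia. apply meq_nil_r in H1; auto.
  - apply H; simpl; lia.
Qed.

Lemma tight_ctx_ceq G G' : tight_ctx G -> ceq G G' -> tight_ctx G'.
Proof. intros H1 H2 i; eapply meq_tight; eauto. Qed.

Lemma ptyp_ceq G p A e m f : ptyp G p A e m f -> forall G', ceq G G' -> ptyp G' p A e m f.
Proof.
  induction 1; intros G' HG.
  - constructor. eapply meq_trans; [apply meq_sym, HG|auto].
    intros i Hi. specialize (HG i). rewrite H0 in HG by auto. apply meq_nil_l in HG; auto.
  - econstructor; eauto. intros i. eapply meq_trans; [apply meq_sym, HG|auto].
  - constructor.
    + intros i Hi. specialize (HG i). rewrite H in HG by auto. apply meq_nil_l in HG; auto.
    + eapply tight_ctx_ceq; eauto.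
Qed.

Lemma tight_union G D : tight_ctx (ctx_union G D) -> tight_ctx G /\ tight_ctx D.
Proof. intros H; split; intro i; specialize (H i); unfold ctx_union in H; apply Forall_app in H; tauto. Qed.


Lemma typ_lift_both :
  (forall G t s b e m f, typ G t s b e m f -> forall c d, typ (ctx_ins c d G) (lift c d t) s b e m f) /\
  (forall G t A b e m f, mtyp G t A b e m f -> forall c d, mtyp (ctx_ins c d G) (lift c d t) A b e m f).
Proof.
  apply (typ_mtyp_ind (fun G t s b e m f _ => forall c d, typ (ctx_ins c d G) (lift c d t) s b e m f)
                          (fun G t A b e m f _ => forall c d, mtyp (ctx_ins c d G) (lift c d t) A b e m f));
  simpl; [ intros x s c d; eapply typ_G; [apply ty_ax|cx]
  | intros G t s p A b e m f ep mp fp Ht IH Hp c d;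
    eapply typ_G; [eapply ty_abs with (G := ctx_ins (c + nv p) d G);
      [apply IH| replace (ctx_restr (nv p) (ctx_ins (c + nv p) d G)) with (ctx_restr (nv p) G) by cx; exact Hp]|cx]
  | intros G t s p b e m f Ht IH Hs Htc c d;
    eapply typ_G; [eapply ty_abs_p with (G := ctx_ins (c + nv p) d G);
      [apply IH| exact Hs| replace (ctx_restr (nv p) (ctx_ins (c + nv p) d G)) with (ctx_restr (nv p) G) by cx; exact Htc]|cx]
  | intros G D t u A s bt et mt ft bu eu mu fu Ht IHt Hu IHu c d;
    eapply typ_G; [eapply ty_app; [apply IHt|apply IHu]|cx]
  | intros G t u b e m f Ht IH c d; apply ty_app_p; apply IH
  | intros G D t u A B bt et mt ft bu eu mu fu Ht IHt Hu IHu c d;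
    eapply typ_G; [eapply ty_pair; [apply IHt|apply IHu]|cx]
  | intros t u c d; eapply typ_G; [apply ty_pair_p|cx]
  | intros G D t p u s A A' bt et mt ft ep mp fp bu eu mu fu Ht IHt Hp Hu IHu HA c d;
    eapply typ_G; [eapply ty_match with (G := ctx_ins (c + nv p) d G);
      [apply IHt| replace (ctx_restr (nv p) (ctx_ins (c + nv p) d G)) with (ctx_restr (nv p) G) by cx; exact Hp
      | apply IHu | exact HA]|cx]
  | intros G G' t s s' b e m f Ht IH Hc Hs c d;
    eapply ty_conv; [apply IH| exact (ceq_ins c d G G' Hc) | exact Hs]
  | intros t c d; replace (ctx_ins c d ctx_empty) with ctx_empty by cx; constructor
  | intros G D t s A b1 e1 m1 f1 b2 e2 m2 f2 Ht IHt HA IHA c d;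
    replace (ctx_ins c d (ctx_union G D)) with (ctx_union (ctx_ins c d G) (ctx_ins c d D)) by cx;
    constructor; auto ].
Qed.
Definition typ_lift := proj1 typ_lift_both.
Definition mtyp_lift := proj2 typ_lift_both.

Lemma typ_shape G w s b e m f : typ G w s b e m f ->
  (forall L p t0, w = plug L (Lam p t0) -> s = TM \/ exists A s', s = TArr A s') /\
  (forall L u1 u2, w = plug L (Pair u1 u2) -> s = TM \/ exists A B, s = TProd A B).
Proof.
  induction 1; split; intros L; destruct L as [|[p' v] L]; simpl; intros; try discriminate; eauto.
  - destruct IHtyp as [IH _]. inversion H3; subst. eapply IH; eauto.
  - destruct IHtyp as [_ IH]. inversion H3; subst. eapply IH; eauto.
  - destruct IHtyp as [IH _]. destruct (IH [] _ _ H2) as [->|[A [s0 ->]]]; inversion H1; subst; eauto.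
  - destruct IHtyp as [IH _]. destruct (IH ((p',v)::L) _ _ H2) as [->|[A [s0 ->]]]; inversion H1; subst; eauto.
  - destruct IHtyp as [_ IH]. destruct (IH [] _ _ H2) as [->|[A [s0 ->]]]; inversion H1; subst; eauto.
  - destruct IHtyp as [_ IH]. destruct (IH ((p',v)::L) _ _ H2) as [->|[A [s0 ->]]]; inversion H1; subst; eauto.
Qed.


Lemma beta G w s b e m f : typ G w s b e m f -> forall L p0 t0 A0 s1,
  w = plug L (Lam p0 t0) -> s = TArr A0 s1 ->
  exists b', b = S b' /\ forall D u A' bu eu mu fu, mtyp D u A' bu eu mu fu -> meq A0 A' ->
   typ (ctx_union G D) (plug L (ES t0 p0 (lift 0 (nbv L) u))) s1 (b' + bu) (e + eu) (m + mu) (f + fu).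
Proof.
  induction 1; intros L p0 t0 A0 s1 Hw Hs; destruct L as [|[p' v] L]; simpl in Hw; try discriminate.
  - inversion Hw; inversion Hs; subst. exists b. split; auto. intros D u A' bu eu mu fu Hu HA.
    simpl. rewrite lift_0. eapply typ_cnt; [eapply ty_match; eauto|lia..].
  - inversion Hw; subst. destruct (IHtyp _ _ _ _ _ eq_refl eq_refl) as [b' [Hb K]].
    exists (b' + bu). split; [lia|]. intros D0 u0 A'' bu0 eu0 mu0 fu0 Hu HA.
    pose proof (K (ctx_ins 0 (nv p') D0) (lift 0 (nv p') u0) A'' bu0 eu0 mu0 fu0 (mtyp_lift _ _ _ _ _ _ _ Hu 0 (nv p')) HA) as K'.
    rewrite lift_lift, Nat.add_comm in K'. simpl.
    eapply typ_ceq; [eapply typ_cnt; [eapply ty_match with (G := ctx_union G (ctx_ins 0 (nv p') D0));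
      [exact K'| replace (ctx_restr (nv p') (ctx_union G (ctx_ins 0 (nv p') D0))) with (ctx_restr (nv p') G) by cx; eauto | eauto | eauto] | lia..] | ].
    replace (ctx_drop (nv p') (ctx_union G (ctx_ins 0 (nv p') D0))) with (ctx_union (ctx_drop (nv p') G) D0) by cx.
    apply ceq_perm; intro i; unfold ctx_union. rewrite <- !app_assoc. apply Permutation_app_head, Permutation_app_comm.
  - subst. inversion H1; subst. destruct (IHtyp [] _ _ _ _ eq_refl eq_refl) as [b' [Hb K]].
    exists b'; split; auto. intros. eapply ty_conv; [eapply K; eauto using meq_trans | apply ceq_union; auto using ceq_refl | auto].
  - subst. inversion H1; subst. destruct (IHtyp ((p',v)::L) _ _ _ _ eq_refl eq_refl) as [b' [Hb K]].
    exists b'; split; auto. intros. eapply ty_conv; [eapply K; eauto using meq_trans | apply ceq_union; auto using ceq_refl | auto].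
Qed.

Lemma ceq_restr_sub G0 G1 p1 n A1 e1 m1 f1 :
  ptyp G1 p1 A1 e1 m1 f1 -> nv p1 <= n ->
  (forall i, i < nv p1 -> meq (ctx_restr n G0 i) (G1 i)) ->
  ceq G1 (ctx_restr (nv p1) G0).
Proof.
  intros Hp Hn H i. unfold ctx_restr in *. destruct (Nat.ltb_spec i (nv p1)).
  - specialize (H i H0). destruct (Nat.ltb_spec i n); try lia. apply meq_sym; auto.
  - rewrite (ptyp_support _ _ _ _ _ _ Hp i) by lia. constructor.
Qed.

Lemma mstep_typ Dw w sP bw ew mw fw : typ Dw w sP bw ew mw fw -> forall L u1 u2 X Y,
  w = plug L (Pair u1 u2) -> sP = TProd X Y ->
  forall G0 t0 s bt et mt ft p1 p2 G1 G2 A1 B1 ep1 mp1 fp1 ep2 mp2 fp2,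
  typ G0 t0 s bt et mt ft -> ptyp G1 p1 A1 ep1 mp1 fp1 -> ptyp G2 p2 B1 ep2 mp2 fp2 ->
  meq A1 X -> meq B1 Y ->
  (forall i, meq (ctx_restr (nv p1 + nv p2) G0 i) (if i <? nv p1 then G1 i else G2 (i - nv p1))) ->
  typ (ctx_union (ctx_drop (nv p1 + nv p2) G0) Dw)
      (plug L (ES (ES (lift (nv p1 + nv p2) (nbv L) t0) p1 (lift 0 (nv p2) u1)) p2 u2)) s
      (bt + bw) (et + ew + ep1 + ep2) (mt + mw + mp1 + mp2) (ft + fw + fp1 + fp2).
Proof.
  induction 1; intros L u1 u2 X Y Hw Hs; destruct L as [|[p' v] L]; simpl in Hw; try discriminate;
    intros G0 t0 s0 bt0 et0 mt0 ft0 p1 p2 G1 G2 A1 B1 ep1 mp1 fp1 ep2 mp2 fp2 Ht0 Hp1 Hp2 HA1 HB1 HR.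
  -
    inversion Hw; inversion Hs; subst. simpl. rewrite lift_0.
    assert (Hi : typ (ctx_union (ctx_drop (nv p1) G0) (ctx_ins 0 (nv p2) G))
                    (ES t0 p1 (lift 0 (nv p2) u1)) s0 (bt0 + bt) (et0 + et + ep1) (mt0 + mt + mp1) (ft0 + ft + fp1)).
    { eapply ty_match; [exact Ht0| | apply mtyp_lift; eassumption | exact HA1].
      eapply ptyp_ceq; [exact Hp1|]. eapply (ceq_restr_sub _ _ _ (nv p1 + nv p2)); [exact Hp1|lia|].
      intros i Hi. specialize (HR i). destruct (Nat.ltb_spec i (nv p1)); try lia. exact HR. }
    eapply typ_G; [eapply typ_cnt; [eapply ty_match with (A := B1) (ep := ep2) (mp := mp2) (fp := fp2); [exact Hi| |eassumption|exact HB1]|lia..]|].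
    + eapply ptyp_ceq; [exact Hp2|]. intro i. unfold ctx_restr, ctx_union, ctx_drop, ctx_ins.
      destruct (Nat.ltb_spec i (nv p2)).
      * specialize (HR (i + nv p1)). unfold ctx_restr in HR.
        destruct (Nat.ltb_spec (i + nv p1) (nv p1 + nv p2)); try lia.
        destruct (Nat.ltb_spec (i + nv p1) (nv p1)); try lia.
        destruct (Nat.ltb_spec i 0); try lia. destruct (Nat.ltb_spec i (0 + nv p2)); try lia.
        rewrite app_nil_r. replace (i + nv p1 - nv p1) with i in HR by lia. apply meq_sym; auto.
      * rewrite (ptyp_support _ _ _ _ _ _ Hp2 i) by lia. constructor.
    + cx.
  -
    inversion Hw; subst.
    pose proof (typ_lift _ _ _ _ _ _ _ Ht0 (nv p1 + nv p2) (nv p')) as Ht0'.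
    assert (HR' : forall i, meq (ctx_restr (nv p1 + nv p2) (ctx_ins (nv p1 + nv p2) (nv p') G0) i)
                       (if i <? nv p1 then G1 i else G2 (i - nv p1))).
    { intro i. specialize (HR i). unfold ctx_restr, ctx_ins in *. revert HR; cx_destr; intros; auto; try lia; constructor. }
    pose proof (IHtyp _ _ _ _ _ eq_refl eq_refl _ _ _ _ _ _ _ _ _ _ _ _ _ _ _ _ _ _ _ Ht0' Hp1 Hp2 HA1 HB1 HR') as K.
    rewrite lift_lift, (Nat.add_comm (nbv L) (nv p')) in K. simpl.
    eapply typ_G; [eapply typ_cnt; [eapply ty_match with (A := A) (ep := ep) (mp := mp) (fp := fp); [exact K| |eassumption|eassumption]|lia..]|].
    + match goal with |- ptyp ?c _ _ _ _ _ => replace c with (ctx_restr (nv p') G) by cx end. eassumption.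
    + cx.
  - subst. inversion H1; subst.
    eapply ty_conv; [eapply IHtyp; eauto using meq_trans, meq_sym | apply ceq_union; auto using ceq_refl | apply teq_refl].
  - subst. inversion H1; subst.
    eapply ty_conv; [eapply IHtyp; eauto using meq_trans, meq_sym | apply ceq_union; auto using ceq_refl | apply teq_refl].
Qed.

Lemma mtyp_cnt G t A b e m f b' e' m' f' :
  mtyp G t A b e m f -> b = b' -> e = e' -> m = m' -> f = f' -> mtyp G t A b' e' m' f'.
Proof. intros; subst; auto. Qed.
Lemma mtyp_G G G' t A b e m f : mtyp G t A b e m f -> G = G' -> mtyp G' t A b e m f.
Proof. intros; subst; auto. Qed.

Lemma mtyp_nil D u b e m f : mtyp D u [] b e m f -> D = ctx_empty /\ b = 0 /\ e = 0 /\ m = 0 /\ f = 0.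
Proof. inversion 1; auto. Qed.

Lemma mtyp_single D u s b e m f : mtyp D u [s] b e m f -> typ D u s b e m f.
Proof.
  inversion 1; subst. match goal with Hn : mtyp _ _ [] _ _ _ _ |- _ => apply mtyp_nil in Hn as (-> & -> & -> & -> & ->) end.
  rewrite union_empty_r. eapply typ_cnt; eauto; lia.
Qed.

Lemma mtyp_split X : forall Y D u b e m f, mtyp D u (X ++ Y) b e m f ->
  exists D1 D2 b1 e1 m1 f1 b2 e2 m2 f2, D = ctx_union D1 D2 /\ b = b1 + b2 /\ e = e1 + e2 /\
    m = m1 + m2 /\ f = f1 + f2 /\ mtyp D1 u X b1 e1 m1 f1 /\ mtyp D2 u Y b2 e2 m2 f2.
Proof.
  induction X; simpl; intros Y D u b e m f H.
  - exists ctx_empty, D, 0, 0, 0, 0, b, e, m, f. split; [symmetry; apply union_empty_l|]. repeat split; auto. constructor.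
  - inversion H; subst. match goal with Hn : mtyp _ _ (X ++ Y) _ _ _ _ |- _ => rename Hn into H8 end. destruct (IHX _ _ _ _ _ _ _ H8) as (D1 & D2 & x1 & y1 & z1 & w1 & x2 & y2 & z2 & w2 & -> & -> & -> & -> & -> & HH1 & HH2).
    eexists (ctx_union G D1), D2, _, _, _, _, x2, y2, z2, w2.
    split; [cx|]. repeat split; [..|constructor; eauto|eauto]; lia.
Qed.

Lemma perm_4 {T} (a x b y : list T) : Permutation ((a ++ x) ++ (b ++ y)) ((a ++ b) ++ (x ++ y)).
Proof.
  rewrite <- !app_assoc. apply Permutation_app_head. rewrite !app_assoc. apply Permutation_app_tail.
  apply Permutation_app_comm.
Qed.

Lemma mtyp_perm A B : meq A B -> forall D u b e m f, mtyp D u A b e m f ->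
  exists D', ceq D D' /\ mtyp D' u B b e m f.
Proof.
  induction 1; intros D u b e m f Hm.
  - exists D; split; auto using ceq_refl.
  - inversion Hm; subst. match goal with Hn : mtyp _ _ A _ _ _ _ |- _ => rename Hn into H11 end. destruct (IHmeq _ _ _ _ _ _ H11) as [D' [HD HD']].
    exists (ctx_union G D'); split; [apply ceq_union; auto using ceq_refl|].
    constructor; auto. eapply ty_conv; [eassumption|apply ceq_refl|assumption].
  - inversion Hm; subst. match goal with Hn : mtyp _ _ (s2 :: A) _ _ _ _ |- _ => inversion Hn; subst end.
    exists (ctx_union G0 (ctx_union G D)). split.
    + apply ceq_perm; intro i; unfold ctx_union. rewrite !app_assoc. apply Permutation_app_tail, Permutation_app_comm.
    + eapply mtyp_cnt; [constructor; [eassumption|constructor; eassumption]|lia..].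
  - destruct (IHmeq1 _ _ _ _ _ _ Hm) as [D1 [HD1 H1']]. destruct (IHmeq2 _ _ _ _ _ _ H1') as [D2 [HD2 H2']].
    exists D2; split; eauto using ceq_trans.
Qed.

Lemma rm_union k G D : ctx_rm k (ctx_union G D) = ctx_union (ctx_rm k G) (ctx_rm k D).
Proof. cx. Qed.
Lemma ins_union c d G D : ctx_ins c d (ctx_union G D) = ctx_union (ctx_ins c d G) (ctx_ins c d D).
Proof. cx. Qed.

Lemma ceq_4 a x b y : ceq (ctx_union (ctx_union a x) (ctx_union b y)) (ctx_union (ctx_union a b) (ctx_union x y)).
Proof. apply ceq_perm; intro i; unfold ctx_union; apply perm_4. Qed.

Lemma subst_both :
  (forall G t s b e m f, typ G t s b e m f -> forall k u D bu eu mu fu, mtyp D u (G k) bu eu mu fu ->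
     typ (ctx_union (ctx_rm k G) (ctx_ins 0 k D)) (substk k t u) s (b + bu) (e + eu) (m + mu) (f + fu)) /\
  (forall G t A b e m f, mtyp G t A b e m f -> forall k u D bu eu mu fu, mtyp D u (G k) bu eu mu fu ->
     exists D', ceq D' (ctx_union (ctx_rm k G) (ctx_ins 0 k D)) /\
       mtyp D' (substk k t u) A (b + bu) (e + eu) (m + mu) (f + fu)).
Proof.
  apply (typ_mtyp_ind
    (fun G t s b e m f _ => forall k u D bu eu mu fu, mtyp D u (G k) bu eu mu fu ->
     typ (ctx_union (ctx_rm k G) (ctx_ins 0 k D)) (substk k t u) s (b + bu) (e + eu) (m + mu) (f + fu))
    (fun G t A b e m f _ => forall k u D bu eu mu fu, mtyp D u (G k) bu eu mu fu ->
     exists D', ceq D' (ctx_union (ctx_rm k G) (ctx_ins 0 k D)) /\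
       mtyp D' (substk k t u) A (b + bu) (e + eu) (m + mu) (f + fu))).
  -
    intros x s k u D bu eu mu fu Hu. unfold ctx_single in Hu. simpl.
    destruct (Nat.eqb_spec k x).
    + subst. apply mtyp_single in Hu. destruct (Nat.ltb_spec x x); try lia. rewrite Nat.eqb_refl.
      eapply typ_G; [apply (typ_lift _ _ _ _ _ _ _ Hu 0 x)|]. cx.
    + apply mtyp_nil in Hu as (-> & -> & -> & -> & ->).
      destruct (Nat.ltb_spec x k).
      * eapply typ_G; [apply ty_ax|]. cx.
      * destruct (Nat.eqb_spec x k); try lia. eapply typ_G; [apply ty_ax|]. cx.
  -
    intros G t s p A b e m f ep mp fp Ht IH Hp k u D bu eu mu fu Hu. simpl.
    eapply typ_G; [eapply typ_cnt; [eapply ty_abs with (G := ctx_union (ctx_rm (k + nv p) G) (ctx_ins 0 (k + nv p) D));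
      [apply IH; exact Hu| replace (ctx_restr (nv p) (ctx_union (ctx_rm (k + nv p) G) (ctx_ins 0 (k + nv p) D))) with (ctx_restr (nv p) G) by cx; exact Hp]|lia..]|cx].
  -
    intros G t s p b e m f Ht IH Hs Htc k u D bu eu mu fu Hu. simpl.
    eapply typ_G; [eapply typ_cnt; [eapply ty_abs_p with (G := ctx_union (ctx_rm (k + nv p) G) (ctx_ins 0 (k + nv p) D));
      [apply IH; exact Hu| exact Hs | replace (ctx_restr (nv p) (ctx_union (ctx_rm (k + nv p) G) (ctx_ins 0 (k + nv p) D))) with (ctx_restr (nv p) G) by cx; exact Htc]|lia..]|cx].
  -
    intros G D1 t u1 A s bt et mt ft bu1 eu1 mu1 fu1 Ht IHt Hu1 IHu1 k u D bu eu mu fu Hu. simpl.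
    apply mtyp_split in Hu as (Dx & Dy & bx & ex & mx & fx & by' & ey & my & fy & -> & -> & -> & -> & -> & Hx & Hy).
    destruct (IHu1 k u Dy _ _ _ _ Hy) as [D' [HD' HmD']].
    eapply typ_ceq; [eapply typ_cnt; [eapply ty_app; [apply (IHt k u Dx _ _ _ _ Hx)|exact HmD']|lia..]|].
    rewrite rm_union, ins_union.
    eapply ceq_trans; [apply ceq_union; [apply ceq_refl|exact HD']|apply ceq_4].
  -
    intros G t u1 b e m f Ht IHt k u D bu eu mu fu Hu. simpl. apply ty_app_p. apply IHt; exact Hu.
  -
    intros G D1 t u1 A B bt et mt ft bu1 eu1 mu1 fu1 Ht IHt Hu1 IHu1 k u D bu eu mu fu Hu. simpl.
    apply mtyp_split in Hu as (Dx & Dy & bx & ex & mx & fx & by' & ey & my & fy & -> & -> & -> & -> & -> & Hx & Hy).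
    destruct (IHt k u Dx _ _ _ _ Hx) as [D0 [HD0 HmD0]].
    destruct (IHu1 k u Dy _ _ _ _ Hy) as [D' [HD' HmD']].
    eapply typ_ceq; [eapply typ_cnt; [eapply ty_pair; [exact HmD0|exact HmD']|lia..]|].
    rewrite rm_union, ins_union.
    eapply ceq_trans; [apply ceq_union; [exact HD0|exact HD']|apply ceq_4].
  -
    intros t u1 k u D bu eu mu fu Hu. simpl.
    apply mtyp_nil in Hu as (-> & -> & -> & -> & ->).
    eapply typ_G; [apply ty_pair_p|]. cx.
  -
    intros G D1 t p u1 s A A' bt et mt ft ep mp fp bu1 eu1 mu1 fu1 Ht IHt Hp Hu1 IHu1 HA k u D bu eu mu fu Hu. simpl.
    apply mtyp_split in Hu as (Dx & Dy & bx & ex & mx & fx & by' & ey & my & fy & -> & -> & -> & -> & -> & Hx & Hy).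
    destruct (IHu1 k u Dy _ _ _ _ Hy) as [D' [HD' HmD']].
    pose proof (IHt (k + nv p) u Dx _ _ _ _ Hx) as Kt.
    eapply typ_ceq; [eapply typ_cnt; [eapply ty_match with (A := A) (ep := ep) (mp := mp) (fp := fp);
       [exact Kt| |exact HmD'|exact HA]|lia..]|].
    + replace (ctx_restr (nv p) (ctx_union (ctx_rm (k + nv p) G) (ctx_ins 0 (k + nv p) Dx))) with (ctx_restr (nv p) G) by cx; exact Hp.
    + replace (ctx_drop (nv p) (ctx_union (ctx_rm (k + nv p) G) (ctx_ins 0 (k + nv p) Dx)))
        with (ctx_union (ctx_rm k (ctx_drop (nv p) G)) (ctx_ins 0 k Dx)) by cx.
      rewrite rm_union, ins_union.
      eapply ceq_trans; [apply ceq_union; [apply ceq_refl|exact HD']|apply ceq_4].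
  -
    intros G G' t s s' b e m f Ht IHt Hc Hs k u D bu eu mu fu Hu.
    destruct (mtyp_perm _ _ (meq_sym _ _ (Hc k)) _ _ _ _ _ _ Hu) as [D' [HD HD']].
    eapply ty_conv; [apply (IHt k u D' _ _ _ _ HD')| |exact Hs].
    apply ceq_union; [apply ceq_rm; exact Hc|apply ceq_ins, ceq_sym; exact HD].
  -
    intros t k u D bu eu mu fu Hu. apply mtyp_nil in Hu as (-> & -> & -> & -> & ->).
    exists ctx_empty. split; [|constructor]. replace (ctx_union (ctx_rm k ctx_empty) (ctx_ins 0 k ctx_empty)) with ctx_empty by cx.
    apply ceq_refl.
  -
    intros G D1 t s A b1 e1 m1 f1 b2 e2 m2 f2 Ht IHt HA IHA k u D bu eu mu fu Hu.
    apply mtyp_split in Hu as (Dx & Dy & bx & ex & mx & fx & by' & ey & my & fy & -> & -> & -> & -> & -> & Hx & Hy).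
    destruct (IHA k u Dy _ _ _ _ Hy) as [D' [HD' HmD']].
    eexists. split; [|eapply mtyp_cnt; [constructor; [apply (IHt k u Dx _ _ _ _ Hx)|exact HmD']|lia..]].
    rewrite rm_union, ins_union.
    eapply ceq_trans; [apply ceq_union; [apply ceq_refl|exact HD']|apply ceq_4].
Qed.

Definition dec (k : kind) (b e m b' e' m' : nat) : Prop :=
  match k with
  | Kb => b = S b' /\ e = e' /\ m = m'
  | Ke => b = b' /\ e = S e' /\ m = m'
  | Km => b = b' /\ e = e' /\ m = S m'
  end.

Definition typ_subst := proj1 subst_both.

Lemma ptyp_PP_single G p1 p2 A e m f : ptyp G (PP p1 p2) A e m f -> exists x, A = [x].
Proof. inversion 1; eauto. Qed.

Lemma sr_both :
  (forall G t s b e m f, typ G t s b e m f -> forall k t', hstep t k t' ->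
     exists b' e' m', dec k b e m b' e' m' /\ typ G t' s b' e' m' f) /\
  (forall G t A b e m f, mtyp G t A b e m f -> forall s, A = [s] -> forall k t', hstep t k t' ->
     exists b' e' m', dec k b e m b' e' m' /\ mtyp G t' [s] b' e' m' f).
Proof.
  apply (typ_mtyp_ind
    (fun G t s b e m f _ => forall k t', hstep t k t' ->
     exists b' e' m', dec k b e m b' e' m' /\ typ G t' s b' e' m' f)
    (fun G t A b e m f _ => forall s, A = [s] -> forall k t', hstep t k t' ->
     exists b' e' m', dec k b e m b' e' m' /\ mtyp G t' [s] b' e' m' f)).
  - intros x s k t' H. simpl in H. contradiction.
  -
    intros G t s p A b e m f ep mp fp Ht IH Hp k v H. simpl in H. destruct H as [t0' [H ->]].
    destruct (IH _ _ H) as (b' & e' & m' & Hd & Ht').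
    exists (S b'), (e' + ep), (m' + mp). split; [destruct k; simpl in *; lia|].
    eapply ty_abs; eauto.
  -
    intros G t s p b e m f Ht IH Hs Htc k v H. simpl in H. destruct H as [t0' [H ->]].
    destruct (IH _ _ H) as (b' & e' & m' & Hd & Ht').
    exists b', e', m'. split; auto.
    eapply ty_abs_p; eauto.
  -
    intros G D t u A s bt et mt ft bu eu mu fu Ht IHt Hu IHu k v H. simpl in H.
    destruct H as [(-> & L & p & t0 & -> & ->) | (t1' & H & Hna & ->)].
    + destruct (beta _ _ _ _ _ _ _ Ht L p t0 A s eq_refl eq_refl) as (b' & Hb & K).
      exists (b' + bu), (et + eu), (mt + mu). split; [simpl; lia|].
      eapply K; [exact Hu|apply meq_refl].
    + destruct (IHt _ _ H) as (b' & e' & m' & Hd & Ht').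
      exists (b' + bu), (e' + eu), (m' + mu). split; [destruct k; simpl in *; lia|].
      eapply ty_app; eauto.
  -
    intros G t u b e m f Ht IHt k v H. simpl in H.
    destruct H as [(-> & L & p & t0 & -> & ->) | (t1' & H & Hna & ->)].
    + destruct (proj1 (typ_shape _ _ _ _ _ _ _ Ht) L p t0 eq_refl) as [Hc|[? [? Hc]]]; discriminate.
    + destruct (IHt _ _ H) as (b' & e' & m' & Hd & Ht').
      exists b', e', m'. split; auto. apply ty_app_p; auto.
  - intros. simpl in *. contradiction.
  - intros. simpl in *. contradiction.
  -
    intros G D t p u s A A' bt et mt ft ep mp fp bu eu mu fu Ht IHt Hp Hu IHu HA k v H. simpl in H.
    destruct H as [Hm | [He | [Hb | Ha]]].
    + destruct Hm as (-> & p1 & p2 & L & u1 & u2 & -> & -> & Hnf & ->).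
      inversion Hp; subst.
      * destruct (meq_single _ _ HA) as (s' & -> & Hs').
        inversion Hs'; subst. apply mtyp_single in Hu.
        match goal with
        | H1 : ptyp _ p1 _ _ _ _, H2 : ptyp _ p2 _ _ _ _, HR : forall i, meq _ _ |- _ =>
          pose proof (mstep_typ _ _ _ _ _ _ _ Hu L u1 u2 _ _ eq_refl eq_refl _ _ _ _ _ _ _ _ _ _ _ _ _ _ _ _ _ _ _
                        Ht H1 H2 ltac:(eassumption) ltac:(eassumption) HR) as K
        end.
        eexists _, _, _. split; cycle 1. { eapply typ_cnt; [exact K|reflexivity|reflexivity|reflexivity|lia]. } simpl; lia.
      * destruct (meq_single _ _ HA) as (s' & -> & Hs'). apply teq_TN in Hs'; subst.
        apply mtyp_single in Hu.
        destruct (proj2 (typ_shape _ _ _ _ _ _ _ Hu) L u1 u2 eq_refl) as [Hc|[? [? Hc]]]; discriminate.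
    + destruct He as (-> & -> & Hnf & ->).
      inversion Hp; subst.
      assert (HG : meq (G 0) A') by (eapply meq_trans; [|exact HA]; assumption).
      destruct (mtyp_perm _ _ (meq_sym _ _ HG) _ _ _ _ _ _ Hu) as [D' [HD HD']].
      pose proof (typ_subst _ _ _ _ _ _ _ Ht 0 u D' _ _ _ _ HD') as K.
      exists (bt + bu), (et + eu), (mt + mu). split; [simpl; lia|].
      eapply typ_ceq; [eapply typ_cnt; [exact K|lia..]|].
      replace (ctx_union (ctx_rm 0 G) (ctx_ins 0 0 D')) with (ctx_union (ctx_drop 1 G) D') by cx.
      apply ceq_union; [apply ceq_refl|apply ceq_sym; exact HD].
    + destruct Hb as (t' & H & ->).
      destruct (IHt _ _ H) as (b' & e' & m' & Hd & Ht').
      exists (b' + bu), (e' + eu + ep), (m' + mu + mp). split; [destruct k; simpl in *; lia|].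
      eapply ty_match; eauto.
    + destruct Ha as (Hnf & Hpv & u' & H & ->).
      destruct p as [|p1 p2]; [contradiction|].
      destruct (ptyp_PP_single _ _ _ _ _ _ _ Hp) as [x ->].
      destruct (meq_single _ _ HA) as (s' & -> & Hs').
      destruct (IHu s' eq_refl _ _ H) as (b' & e' & m' & Hd & Hu').
      exists (bt + b'), (et + e' + ep), (mt + m' + mp). split; [destruct k; simpl in *; lia|].
      eapply ty_match; eauto.
  -
    intros G G' t s s' b e m f Ht IHt Hc Hs k v H.
    destruct (IHt _ _ H) as (b' & e' & m' & Hd & Ht').
    exists b', e', m'. split; auto. eapply ty_conv; eauto.
  - intros. discriminate.
  -
    intros G D t s A b1 e1 m1 f1 b2 e2 m2 f2 Ht IHt HA IHA s0 Hs k v H.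
    inversion Hs; subst. apply mtyp_nil in HA as (-> & -> & -> & -> & ->).
    destruct (IHt _ _ H) as (b' & e' & m' & Hd & Ht').
    exists (b' + 0), (e' + 0), (m' + 0). split; [destruct k; simpl in *; lia|].
    constructor; auto. constructor.
Qed.

Definition normal (t : term) : Prop := forall k w, ~ hstep t k w.

Lemma normal_lam p t : normal (Lam p t) -> normal t.
Proof. intros Hn k w H. apply (Hn k (Lam p w)). simpl. eauto. Qed.

Lemma normal_app t u : normal (App t u) -> normal t /\ ~ abs t.
Proof.
  intros Hn. assert (Ha : ~ abs t).
  { intros (L & p & t0 & ->). apply (Hn Kb (plug L (ES t0 p (lift 0 (nbv L) u)))). simpl. left. eauto 10. }
  split; auto. intros k w H. apply (Hn k (App w u)). simpl. right. eauto.
Qed.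

Lemma normal_es t p u : normal (ES t p u) ->
  normal t /\ p <> PV /\ normal u /\ ~ (exists L u1 u2, u = plug L (Pair u1 u2)).
Proof.
  intros Hn. assert (Ht : normal t).
  { intros k w H. apply (Hn k (ES w p u)). simpl. right; right; left. eauto. }
  assert (Hp : p <> PV).
  { intros ->. apply (Hn Ke (subst0 t u)). simpl. right; left. eauto. }
  split; auto. split; auto. split.
  - intros k w H. apply (Hn k (ES t p w)). simpl. right; right; right. eauto.
  - intros (L & u1 & u2 & ->). destruct p as [|p1 p2]; [contradiction|].
    apply (Hn Km (plug L (ES (ES (lift (nv p1 + nv p2) (nbv L) t) p1 (lift 0 (nv p2) u1)) p2 u2))).
    simpl. left. split; auto. exists p1, p2, L, u1, u2. eauto.
Qed.

Definition NFP (t : term) (s : ty) (b e m f : nat) : Prop :=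
  (s = TN -> canN t /\ b = 0 /\ e = 0 /\ m = 0 /\ csize t = f) /\
  (s = TM -> canM t /\ b = 0 /\ e = 0 /\ m = 0 /\ csize t = f) /\
  (forall A B, s = TProd A B -> exists L u1 u2, t = plug L (Pair u1 u2)) /\
  (forall A s', s = TArr A s' -> abs t).

Lemma tight_restr_drop n G : tight_ctx (ctx_restr n G) -> tight_ctx (ctx_drop n G) -> tight_ctx G.
Proof.
  intros H1 H2 i. destruct (Nat.ltb_spec i n).
  - specialize (H1 i). unfold ctx_restr in H1. destruct (Nat.ltb_spec i n); try lia; auto.
  - specialize (H2 (i - n)). unfold ctx_drop in H2. replace (i - n + n) with i in H2 by lia. auto.
Qed.

Lemma nf_both :
  (forall G t s b e m f, typ G t s b e m f -> tight_ctx G -> normal t -> NFP t s b e m f) /\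
  (forall G t A b e m f, mtyp G t A b e m f -> forall s, A = [s] -> tight_ctx G -> normal t -> NFP t s b e m f).
Proof.
  apply (typ_mtyp_ind
    (fun G t s b e m f _ => tight_ctx G -> normal t -> NFP t s b e m f)
    (fun G t A b e m f _ => forall s, A = [s] -> tight_ctx G -> normal t -> NFP t s b e m f)).
  -
    intros x s HG Hn. specialize (HG x). unfold ctx_single in HG. rewrite Nat.eqb_refl in HG.
    inversion HG; subst. destruct H1 as [-> | ->]; repeat split; intros; try discriminate; auto using canN, canM.
  -
    intros G t s p A b e m f ep mp fp Ht IH Hp HG Hn. repeat split; intros; try discriminate.
    exists [], p, t. reflexivity.
  -
    intros G t s p b e m f Ht IH Hs Htc HG Hn.
    assert (HG' : tight_ctx G) by (eapply tight_restr_drop; eauto).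
    destruct (IH HG' (normal_lam _ _ Hn)) as (HN & HM & _ & _).
    repeat split; intros; try discriminate.
    all: destruct Hs as [-> | ->]; [destruct (HN eq_refl) as (? & ? & ? & ? & ?)|destruct (HM eq_refl) as (? & ? & ? & ? & ?)];
      simpl; try constructor; auto using canN, canM; lia.
  -
    intros G D t u A s bt et mt ft bu eu mu fu Ht IHt Hu IHu HG Hn.
    destruct (tight_union _ _ HG) as [HG1 HG2]. destruct (normal_app _ _ Hn) as [Hn1 Ha].
    destruct (IHt HG1 Hn1) as (_ & _ & _ & HA). exfalso. apply Ha. eapply HA; eauto.
  -
    intros G t u b e m f Ht IHt HG Hn. destruct (normal_app _ _ Hn) as [Hn1 Ha].
    destruct (IHt HG Hn1) as (HN & _ & _ & _). destruct (HN eq_refl) as (? & ? & ? & ? & ?).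
    repeat split; intros; try discriminate; simpl; auto using canN; try lia.
    all: try (constructor; auto).
  -
    intros. repeat split; intros; try discriminate. exists [], t, u. reflexivity.
  -
    intros. repeat split; intros; try discriminate; auto using canM.
  -
    intros G D t p u s A A' bt et mt ft ep mp fp bu eu mu fu Ht IHt Hp Hu IHu HA HG Hn.
    destruct (tight_union _ _ HG) as [HG1 HG2].
    destruct (normal_es _ _ _ Hn) as (Hnt & Hpv & Hnu & Hnm).
    destruct p as [|p1 p2]; [contradiction|].
    inversion Hp; subst.
    + destruct (meq_single _ _ HA) as (s' & -> & Hs'). inversion Hs'; subst.
      destruct (IHu _ eq_refl HG2 Hnu) as (_ & _ & HP & _).
      exfalso. apply Hnm. eapply HP; eauto.
    + destruct (meq_single _ _ HA) as (s' & -> & Hs'). apply teq_TN in Hs'; subst.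
      destruct (IHu _ eq_refl HG2 Hnu) as (HNu & _ & _ & _).
      destruct (HNu eq_refl) as (Hcu & -> & -> & -> & Hsu).
      assert (HGt : tight_ctx G) by (eapply tight_restr_drop; eauto).
      destruct (IHt HGt Hnt) as (HN & HM & HP & HA').
      repeat split; intros; subst.
      all: try (destruct (HN eq_refl) as (? & ? & ? & ? & ?); subst; simpl; try constructor; auto; lia).
      all: try (destruct (HM eq_refl) as (? & ? & ? & ? & ?); subst; simpl; try constructor; auto; lia).
      * destruct (HP _ _ eq_refl) as (L & u1 & u2 & ->). exists ((PP p1 p2, u) :: L), u1, u2. reflexivity.
      * destruct (HA' _ _ eq_refl) as (L & p0 & t0 & ->). exists ((PP p1 p2, u) :: L), p0, t0. reflexivity.
  -
    intros G G' t s s' b e m f Ht IHt Hc Hs HG Hn.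
    assert (HG0 : tight_ctx G) by (eapply tight_ctx_ceq; [exact HG|apply ceq_sym; exact Hc]).
    destruct (IHt HG0 Hn) as (HN & HM & HP & HA).
    repeat split; intros; subst.
    all: try (apply teq_TN_r in Hs; subst; apply HN; reflexivity).
    all: try (apply teq_TM_r in Hs; subst; apply HM; reflexivity).
    + inversion Hs; subst. eapply HP; eauto.
    + inversion Hs; subst. eapply HA; eauto.
  - intros. discriminate.
  -
    intros G D t s A b1 e1 m1 f1 b2 e2 m2 f2 Ht IHt HA IHA s0 Hs HG Hn.
    inversion Hs; subst. apply mtyp_nil in HA as (-> & -> & -> & -> & ->).
    rewrite union_empty_r in HG.
    destruct (IHt HG Hn) as (HN & HM & HP & HA).
    repeat split; intros; subst; eauto.
    all: try (destruct (HN eq_refl) as (? & ? & ? & ? & ?); lia).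
    all: try (destruct (HM eq_refl) as (? & ? & ? & ? & ?); lia).
    all: try (destruct (HN eq_refl) as (? & ? & ? & ? & ?); auto).
    all: try (destruct (HM eq_refl) as (? & ? & ? & ? & ?); auto).
Qed.

Lemma main_aux n : forall G t s b e m f, b + e + m <= n -> typ G t s b e m f -> tight_ctx G -> tight s ->
  exists u, canM u /\ hseq t b e m u /\ csize u = f.
Proof.
  induction n as [n IH] using lt_wf_ind.
  intros G t s b e m f Hle Ht HG Hs.
  destruct (classic (exists k w, hstep t k w)) as [(k & w & Hst) | Hno].
  - destruct (proj1 sr_both _ _ _ _ _ _ _ Ht k w Hst) as (b' & e' & m' & Hd & Ht').
    destruct k; simpl in Hd; destruct Hd as (-> & -> & ->);
    (destruct (IH (b' + e' + m') ltac:(lia) _ _ _ _ _ _ _ (le_n _) Ht' HG Hs) as (u & Hu & Hseq & Hsz);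
     exists u; split; [exact Hu|split; [|exact Hsz]]).
    + eapply hseq_b; eauto.
    + eapply hseq_e; eauto.
    + eapply hseq_m; eauto.
  - assert (Hn : normal t) by (intros k w H; apply Hno; eauto).
    destruct (proj1 nf_both _ _ _ _ _ _ _ Ht HG Hn) as (HN & HM & _ & _).
    destruct Hs as [-> | ->].
    + destruct (HN eq_refl) as (Hc & -> & -> & -> & Hsz). exists t. split; [constructor; auto|split; [constructor|auto]].
    + destruct (HM eq_refl) as (Hc & -> & -> & -> & Hsz). exists t. split; [auto|split; [constructor|auto]].
Qed.

Theorem theorem2 (G : ctx) (t : term) (s : ty) (b e m f : nat) :
  typ G t s b e m f -> tight_ctx G -> tight s ->
  exists u, canM u /\ hseq t b e m u /\ csize u = f.
Proof. intros; eapply main_aux; eauto. Qed.
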